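(* For every $n>3$ and every $\alpha\in\{28,32,44,140\}$, the sensitivity to synchronism of elementary cellular automaton rule $\alpha$ satisfies $\mu(f_{\alpha,n})=\dfrac{2^n-1}{3^n-2^{n+1}+2}$.
   Context: Cells are indexed by $\mathbb{Z}_n=\{0,\dots,n-1\}$, indices modulo $n$. The local rules are $r_{28}(x_1,x_2,x_3)=(\neg x_1\wedge x_2)\vee(x_1\wedge\neg x_2\wedge\neg x_3)$, $r_{32}=x_1\wedge\neg x_2\wedge x_3$, $r_{44}=(\neg x_1\wedge x_2)\vee(x_1\wedge\neg x_2\wedge x_3)$, $r_{140}=x_2\wedge(\neg x_1\vee x_3)$. The global function is $f_{\alpha,n}(x)_i=r_\alpha(x_{i-1},x_i,x_{i+1})$. An update schedule is an ordered partition $\Delta=(\Delta_1,\dots,\Delta_k)$ of $\mathbb{Z}_n$ into nonempty blocks; $\mathcal{P}_n$ is the set of them. For a block $B$ let $f^{(B)}(x)_i=f_{\alpha,n}(x)_i$ if $i\in B$ and $x_i$ otherwise; $f^{(\Delta)}_{\alpha,n}=f^{(\Delta_k)}\circ\cdots\circ f^{(\Delta_1)}$. The dynamics of $\Delta$ is the transition digraph with arcs $(x,f^{(\Delta)}_{\alpha,n}(x))$; $\mathcal{D}(f_{\alpha,n})$ is the set of distinct dynamics over $\Delta\in\mathcal{P}_n$. The sensitivity to synchronism is $\mu(f_{\alpha,n})=|\mathcal{D}(f_{\alpha,n})|/(3^n-2^{n+1}+2)$. *)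

(* Defs.v *)
From mathcomp Require Import all_boot all_order all_algebra.
Set Implicit Arguments. Unset Strict Implicit. Unset Printing Implicit Defensive.
Import GRing.Theory Num.Theory.

(* Configurations over Z_n = 'I_n (indices taken modulo n). *)
Definition conf (n : nat) := {ffun 'I_n -> bool}.

Lemma ord_n_gt0 n (i : 'I_n) : 0 < n.
Proof. exact: leq_ltn_trans (leq0n i) (ltn_ord i). Qed.

Definition shift n (i : 'I_n) (d : nat) : 'I_n :=
  Ordinal (ltn_pmod (i + d) (ord_n_gt0 i)).
Definition prev n (i : 'I_n) : 'I_n := shift i n.-1.
Definition next n (i : 'I_n) : 'I_n := shift i 1.

Definition rule (alpha : nat) (x1 x2 x3 : bool) : bool :=
  if alpha == 28 then (~~ x1 && x2) || (x1 && ~~ x2 && ~~ x3)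
  else if alpha == 32 then x1 && ~~ x2 && x3
  else if alpha == 44 then (~~ x1 && x2) || (x1 && ~~ x2 && x3)
  else if alpha == 140 then x2 && (~~ x1 || x3)
  else false.

Definition gf (alpha n : nat) (x : conf n) : conf n :=
  [ffun i => rule alpha (x (prev i)) (x i) (x (next i))].

Definition block_update (alpha n : nat) (B : {set 'I_n}) (x : conf n) : conf n :=
  [ffun i => if i \in B then gf alpha x i else x i].

Definition sched_update (alpha n : nat) (D : seq {set 'I_n}) (x : conf n) : conf n :=
  foldl (fun y B => block_update alpha B y) x D.

Definition is_schedule (n : nat) (D : seq {set 'I_n}) : bool :=
  [&& all (fun B => B != set0) D,
      pairwise (fun A B : {set 'I_n} => [disjoint A & B]) D &
      \bigcup_(B <- D) B == [set: 'I_n]].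

(* dynamics of Delta: the transition digraph, as its arc set *)
Definition dynamics (alpha n : nat) (D : seq {set 'I_n}) : {set conf n * conf n} :=
  [set (x, sched_update alpha D x) | x : conf n].

(* D(f_{alpha,n}): set of distinct dynamics over all update schedules.
   An ordered partition of Z_n into nonempty blocks has k <= n blocks,
   so it is a k-tuple of sets for some k < n.+1. *)
Definition all_dynamics (alpha n : nat) : {set {set conf n * conf n}} :=
  [set G | [exists k : 'I_n.+1, exists t : (nat_of_ord k).-tuple {set 'I_n},
              is_schedule (tval t) && (G == dynamics alpha (tval t))]].

Definition mu (alpha n : nat) : rat :=
  (#|all_dynamics alpha n|%:R) / (3%:R ^+ n - 2%:R ^+ n.+1 + 2%:R).

(* Main.v *)
Require Import Defs.
From mathcomp Require Import all_boot all_order all_algebra.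
From mathcomp Require Import zify.
Set Implicit Arguments. Unset Strict Implicit. Unset Printing Implicit Defensive.
Notation prev := Defs.prev.
Notation next := Defs.next.

Section Sched.
Variables (alpha n : nat).
Implicit Types (D : seq {set 'I_n}) (x y : conf n).

Definition tD D (i : 'I_n) : nat := find (fun B : {set 'I_n} => i \in B) D.
Definition ys D x m := foldl (fun y B => block_update alpha B y) x (take m D).

Lemma tD_lt D i : is_schedule D -> tD D i < size D.
Proof.
case/and3P=> _ _ /eqP cov; rewrite /tD -has_find.
have : i \in \bigcup_(B <- D) B by rewrite cov inE.
rewrite bigcup_seq => /bigcupP [B BD iB]; apply/hasP; by exists B.
Qed.

Lemma memD D m i : is_schedule D -> m < size D ->
  (i \in nth set0 D m) = (tD D i == m).
Proof.
move=> sD ms; have ti := tD_lt i sD.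
case: eqP => [<-|ne]; first by apply: (@nth_find _ set0 (fun B : {set 'I_n} => i \in B)); rewrite has_find.
apply/negP => im.
case/and3P: sD => _ /(pairwiseP set0) pw _.
have : tD D i <= m.
  rewrite leqNgt; apply/negP => /(@before_find _ set0 (fun B : {set 'I_n} => i \in B)).
  by rewrite im.
rewrite leq_eqVlt => /orP [/eqP e|lt]; first by apply: ne.
have hi : i \in nth set0 D (tD D i).
  by apply: (@nth_find _ set0 (fun B : {set 'I_n} => i \in B)); rewrite has_find.
by have := disjointFr (pw _ _ ti ms lt) hi; rewrite im.
Qed.

Lemma ys_step D x m : m < size D ->
  ys D x m.+1 = block_update alpha (nth set0 D m) (ys D x m).
Proof. by move=> ms; rewrite /ys (take_nth set0 ms) foldl_rcons. Qed.

Lemma ysP D x m : is_schedule D -> m <= size D -> forall i,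
  ys D x m i = if tD D i < m then ys D x (tD D i).+1 i else x i.
Proof.
move=> sD; elim: m => [|m IH] ms i; first by rewrite /ys take0.
case e: (tD D i == m); first by rewrite (eqP e) ltnSn.
rewrite ys_step // ffunE memD // e IH ?(ltnW ms) //.
have -> // : (tD D i < m.+1) = (tD D i < m).
by move/negbT: e; lia.
Qed.

Lemma sched_teq D x : is_schedule D -> forall i : 'I_n,
  sched_update alpha D x i = rule alpha
    (if tD D (prev i) < tD D i then sched_update alpha D x (prev i) else x (prev i))
    (x i)
    (if tD D (next i) < tD D i then sched_update alpha D x (next i) else x (next i)).
Proof.
move=> sD.
have yE : forall j, sched_update alpha D x j = ys D x (tD D j).+1 j.
  move=> j; have -> : sched_update alpha D x = ys D x (size D) by rewrite /ys take_size.
  by rewrite ysP // tD_lt.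
move=> i; rewrite yE ys_step ?tD_lt // ffunE memD ?tD_lt // eqxx ffunE.
have H := ysP x sD (ltnW (tD_lt i sD)).
by rewrite !H ltnn -!yE.
Qed.
End Sched.


Section MkD.
Variable n : nat.
Variable t : 'I_n -> nat.

Definition svals := sort leq (undup [seq t i | i <- enum 'I_n]).
Definition mkD : seq {set 'I_n} := [seq [set i | t i == k] | k <- svals].

Lemma svals_sorted : sorted ltn svals.
Proof.
by rewrite ltn_sorted_uniq_leq sort_uniq undup_uniq sort_sorted //; exact: leq_total.
Qed.

Lemma mem_svals i : t i \in svals.
Proof. by rewrite mem_sort mem_undup; apply: map_f; rewrite mem_enum. Qed.

Lemma mkD_sched : is_schedule mkD.
Proof.
apply/and3P; split.
- apply/allP => B /mapP [k]; rewrite mem_sort mem_undup => /mapP [i _ ->] ->.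
  by apply/set0Pn; exists i; rewrite inE.
- rewrite pairwise_map; apply: (@sub_pairwise _ [rel x y | x != y]).
    move=> k l /= kl; rewrite -setI_eq0; apply/eqP/setP => i; rewrite !inE.
    by apply/negP => /andP [/eqP -> /eqP e]; rewrite e eqxx in kl.
  by rewrite -uniq_pairwise sort_uniq undup_uniq.
- apply/eqP/setP => i; rewrite in_setT big_map (big_rem (t i)) ?mem_svals //=.
  by rewrite in_setU inE eqxx.
Qed.

Lemma mkD_size : size mkD <= n.
Proof. by rewrite size_map size_sort (leq_trans (size_undup _)) // size_map size_enum_ord. Qed.

Lemma tD_mkD i : tD mkD i = index (t i) svals.
Proof.
rewrite /tD find_map /index; apply: eq_find => k /=; by rewrite inE eq_sym.
Qed.

Lemma tD_mkD_lt i j : (tD mkD i < tD mkD j) = (t i < t j).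
Proof.
rewrite !tD_mkD.
have si := mem_svals i; have sj := mem_svals j.
have S := svals_sorted.
case: (ltngtP (index (t i) svals) (index (t j) svals)) => h.
- by rewrite (sorted_ltn_index ltn_trans S _ _ si sj h).
- by apply/esym/negbTE; rewrite -leqNgt ltnW // (sorted_ltn_index ltn_trans S _ _ sj si h).
- by have := congr1 (nth 0 svals) h; rewrite !nth_index // => ->; rewrite ltnn.
Qed.
End MkD.


Section Mod.
Variable n : nat.
Implicit Types i j k : 'I_n.

Lemma val_shift i d : val (shift i d) = (i + d) %% n.
Proof. by []. Qed.

Lemma n_gt0 i : 0 < n.
Proof. exact: ord_n_gt0 i. Qed.

Lemma next_shift i d : next (shift i d) = shift i d.+1.
Proof. by apply: val_inj; rewrite /= modnDml addn1 -addnS. Qed.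

Lemma shift0 i : shift i 0 = i.
Proof. by apply: val_inj; rewrite /= addn0 modn_small. Qed.

Lemma prev_next i : prev (next i) = i.
Proof.
have n0 := n_gt0 i; apply: val_inj; rewrite /= modnDml.
have -> : i + 1 + n.-1 = i + n by lia.
by rewrite modnDr modn_small.
Qed.

Lemma next_prev i : next (prev i) = i.
Proof.
have n0 := n_gt0 i; apply: val_inj; rewrite /= modnDml.
have -> : i + n.-1 + 1 = i + n by lia.
by rewrite modnDr modn_small.
Qed.

Lemma shift_neq i a b : a < b < a + n -> shift i a != shift i b.
Proof.
case/andP=> ab ban; apply/negP => /eqP /(congr1 val) /=.
move/eqP; rewrite eqn_modDl eq_sym eqn_mod_dvd ?(ltnW ab) // => /dvdn_leq.
rewrite subn_gt0 ab => /(_ isT); lia.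
Qed.

Lemma iter_next k e : iter e (@next n) k = shift k e.
Proof. by elim: e => [|e IH]; rewrite ?shift0 //= IH next_shift. Qed.

Lemma cover_next k j : exists2 e, e < n & iter e (@next n) k = j.
Proof.
have n0 := n_gt0 k.
exists ((j + n - k) %% n); first by rewrite ltn_mod.
apply: val_inj; rewrite iter_next /= modnDmr.
have -> : k + (j + n - k) = j + n by have := ltn_ord k; lia.
by rewrite modnDr modn_small.
Qed.

Lemma iter_prev_next e j : iter e (@prev n) (iter e (@next n) j) = j.
Proof. by elim: e j => [|e IH] j //; rewrite iterSr iterS prev_next IH. Qed.

Lemma cover_prev k j : exists2 e, e < n & iter e (@prev n) k = j.
Proof.
have [e en ej] := cover_next j k.
by exists e => //; rewrite -ej iter_prev_next.
Qed.
End Mod.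

Section RunLength.
Variable n : nat.
Variable phi : 'I_n -> bool.
Variable nb : 'I_n -> 'I_n.

Fixpoint Arun d i := if d is d'.+1 then phi i && Arun d' (nb i) else phi i.
Definition rlN N i := \sum_(0 <= d < N) Arun d i.
Definition rl i := rlN n i.

Lemma Arun_phi d i : Arun d i -> phi i.
Proof. by case: d => [|d] //= /andP []. Qed.

Lemma Arun_all d i : Arun d i -> forall e, e <= d -> phi (iter e nb i).
Proof.
elim: d i => [|d IH] i /=; first by move=> pi [|e].
case/andP=> pi A [|e] // ed; rewrite iterSr; exact: IH.
Qed.

Lemma rl0 i : ~~ phi i -> rl i = 0.
Proof.
move=> npi; rewrite /rl /rlN big1 // => d _.
by apply/eqP; rewrite eqb0; apply: contra npi; apply: Arun_phi.
Qed.

Lemma rlN_recl N i : rlN N.+1 i = phi i + \sum_(0 <= d < N) (phi i && Arun d (nb i)).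
Proof. by rewrite /rlN big_nat_recl. Qed.

Lemma rlN_recr N i : rlN N.+1 i = rlN N i + Arun N i.
Proof. by rewrite /rlN big_nat_recr. Qed.

Lemma rlS i : (forall k j, exists2 e, e < n & iter e nb k = j) ->
  (exists j, ~~ phi j) -> phi i -> rl i = (rl (nb i)).+1.
Proof.
move=> cov [j nj] pi.
have n0 : 0 < n by apply: (leq_ltn_trans (leq0n i) (ltn_ord i)).
rewrite /rl -[X in rlN X i](prednK n0) -[X in rlN X (nb i)](prednK n0).
rewrite rlN_recl rlN_recr pi.
have -> : Arun n.-1 (nb i) = false.
  apply/negP => A; have [e en ej] := cov (nb i) j.
  by move: nj; rewrite -ej (Arun_all A) //; move: en; rewrite -{1}(prednK n0) ltnS.
by rewrite addn0 add1n.
Qed.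
End RunLength.


Definition all1 n : {ffun 'I_n -> bool} := [ffun => true].

Section Frame.
Variables (alpha n : nat).
Variable feat : ('I_n -> nat) -> {ffun 'I_n -> bool}.
Variable NB : 'I_n -> 'I_n.
Variable dep : {ffun 'I_n -> bool} -> 'I_n -> bool.
Variable G : conf n -> {ffun 'I_n -> bool} -> 'I_n -> bool -> bool.
Variable mkT : {ffun 'I_n -> bool} -> 'I_n -> nat.

Definition solves phi x (y : conf n) :=
  forall i, y i = G x phi i (if dep phi i then y (NB i) else x (NB i)).

Hypothesis Hsol : forall D x, is_schedule D -> solves (feat (tD D)) x (sched_update alpha D x).
Hypothesis Hdep : forall t i, dep (feat t) i -> t (NB i) < t i.
Hypothesis Hnot1 : forall t, feat t != all1 n.
Hypothesis Hinv : forall t t', (forall i j, (t i < t j) = (t' i < t' j)) -> feat t = feat t'.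
Hypothesis HmkT : forall phi, phi != all1 n -> feat (mkT phi) = phi.
Hypothesis Hinj : forall phi phi', phi != all1 n -> phi' != all1 n ->
  (forall x, exists y, solves phi x y /\ solves phi' x y) -> phi = phi'.

Lemma uniq_sol t phi x y1 y2 : (forall i, dep phi i -> t (NB i) < t i) ->
  solves phi x y1 -> solves phi x y2 -> y1 = y2.
Proof.
move=> Hd s1 s2; apply/ffunP => i.
suff H : forall m i, t i < m -> y1 i = y2 i by exact: (H (t i).+1).
elim=> [|m IH] j //; rewrite ltnS => tj.
rewrite s1 s2; case d: (dep phi j) => //.
by rewrite IH // (leq_trans (Hd _ d)).
Qed.

Definition dynF phi := dynamics alpha (mkD (mkT phi)).

Lemma feat_mkD phi : phi != all1 n -> feat (tD (mkD (mkT phi))) = phi.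
Proof.
move=> p1; rewrite -{2}(HmkT p1); apply: Hinv => i j; exact: tD_mkD_lt.
Qed.

Lemma dyn_eq D1 D2 : is_schedule D1 -> is_schedule D2 ->
  feat (tD D1) = feat (tD D2) -> dynamics alpha D1 = dynamics alpha D2.
Proof.
move=> s1 s2 e; rewrite /dynamics; apply: eq_imset => x.
congr (_, _); apply: (@uniq_sol (tD D1) (feat (tD D1)) x).
- by move=> i; apply: Hdep.
- exact: Hsol.
- rewrite e; exact: Hsol.
Qed.

Lemma dyn_fun (D1 D2 : seq {set 'I_n}) (x : conf n) : dynamics alpha D1 = dynamics alpha D2 ->
  sched_update alpha D1 x = sched_update alpha D2 x.
Proof.
move=> e; have : (x, sched_update alpha D1 x) \in dynamics alpha D2.
  by rewrite -e; apply: imset_f.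
by case/imsetP => x' _ [-> ->].
Qed.

Lemma all_dynE : all_dynamics alpha n = dynF @: [set phi | phi != all1 n].
Proof.
apply/setP => Gr; apply/idP/idP.
- rewrite inE => /existsP [k /existsP [tu /andP [sD /eqP ->]]].
  apply/imsetP; exists (feat (tD tu)); first by rewrite inE Hnot1.
  apply: dyn_eq => //; first exact: mkD_sched.
  by rewrite feat_mkD ?Hnot1.
- case/imsetP => phi; rewrite inE => p1 ->.
  rewrite inE; apply/existsP.
  have hs : size (mkD (mkT phi)) < n.+1 by rewrite ltnS mkD_size.
  exists (Ordinal hs); apply/existsP; exists (in_tuple (mkD (mkT phi))).
  by rewrite /= mkD_sched eqxx.
Qed.

Lemma card_all_dyn : #|all_dynamics alpha n| = (2 ^ n).-1.
Proof.
rewrite all_dynE card_in_imset.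
  have -> : [set phi | phi != all1 n] = [set~ all1 n] by apply/setP => p; rewrite !inE.
  by rewrite cardsC1 card_ffun card_bool card_ord.
move=> p1 p2; rewrite !inE => h1 h2 e.
apply: Hinj => // x.
exists (sched_update alpha (mkD (mkT p1)) x); split.
- rewrite -{1}(feat_mkD h1); exact/Hsol/mkD_sched.
- rewrite (dyn_fun x e) -{1}(feat_mkD h2); exact/Hsol/mkD_sched.
Qed.
End Frame.

Lemma rule140E a b c : rule 140 a b c = b && (~~ a || c). Proof. by []. Qed.
Lemma rule28E a b c : rule 28 a b c = (~~ a && b) || (a && ~~ b && ~~ c). Proof. by []. Qed.
Lemma rule44E a b c : rule 44 a b c = (~~ a && b) || (a && ~~ b && c). Proof. by []. Qed.
Lemma rule32E a b c : rule 32 a b c = a && ~~ b && c. Proof. by []. Qed.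

Section R140.
Variable n : nat.
Definition feat140 (t : 'I_n -> nat) : {ffun 'I_n -> bool} := [ffun i => t (next i) < t i].
Definition G140 (x : conf n) (phi : {ffun 'I_n -> bool}) (i : 'I_n) (v : bool) :=
  x i && (~~ x (prev i) || v).
Definition dep1 (phi : {ffun 'I_n -> bool}) (i : 'I_n) := phi i.

Lemma sol140 D x : is_schedule D ->
  solves (@next n) dep1 G140 (feat140 (tD D)) x (sched_update 140 D x).
Proof.
move=> sD i; rewrite (@sched_teq 140 n D x sD i) /G140 /dep1 ffunE rule140E /=.
case xi: (x i) => //=.
case: ifP => hp //.
rewrite (@sched_teq 140 n D x sD (prev i)) next_prev xi /=.
have -> : (tD D i < tD D (prev i)) = false by apply/negbTE; rewrite -leqNgt ltnW.
by rewrite !rule140E /= orbT andbT.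
Qed.
End R140.


Section Gen.
Variable n : nat.
Implicit Types i j : 'I_n.

Lemma iter_next_prev e j : iter e (@next n) (iter e (@prev n) j) = j.
Proof. by elim: e j => [|e IH] j //; rewrite iterSr iterS next_prev IH. Qed.

Lemma exists_base i d : exists j, shift j d = i.
Proof. by exists (iter d (@prev n) i); rewrite -iter_next iter_next_prev. Qed.

Lemma prev_shiftS j d : prev (shift j d.+1) = shift j d.
Proof. by rewrite -next_shift prev_next. Qed.

Lemma shift_eqF j a b : a < b < a + n -> (shift j a == shift j b) = false.
Proof. by move=> h; apply/negbTE/shift_neq. Qed.

Lemma shift_eqF' j a b : b < a < b + n -> (shift j a == shift j b) = false.
Proof. by move=> h; rewrite eq_sym; apply/negbTE/shift_neq. Qed.

Lemma exists_min (t : 'I_n -> nat) : 0 < n -> exists i, forall j, t i <= t j.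
Proof.
move=> n0; pose i0 : 'I_n := Ordinal n0.
by case: (@arg_minnP _ i0 xpredT t isT) => i _ imin; exists i => j; apply: imin.
Qed.

Lemma neq_all1 (phi : {ffun 'I_n -> bool}) : phi != all1 n -> exists j, ~~ phi j.
Proof.
move=> h; apply/existsP; apply: contraR h; rewrite negb_exists => /forallP H.
by apply/eqP/ffunP => j; rewrite ffunE; move: (H j); rewrite negbK.
Qed.
End Gen.

Ltac neqs := repeat match goal with
  | |- context [shift ?j ?a == shift ?j ?a] => rewrite eqxx
  | |- context [shift ?j ?a == shift ?j ?b] =>
      first [ rewrite (@shift_eqF _ j a b); [|lia]
            | rewrite (@shift_eqF' _ j a b); [|lia] ]
  end.

Section R140b.
Variable n : nat.
Hypothesis n4 : 3 < n.

Lemma inj140 (phi phi' : {ffun 'I_n -> bool}) :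
  (forall x, exists y, solves (@next n) (@dep1 n) (@G140 n) phi x y /\
                       solves (@next n) (@dep1 n) (@G140 n) phi' x y) -> phi = phi'.
Proof.
move=> H; apply/ffunP => i.
have [j <-] := exists_base i 1.
pose x : conf n := [ffun k => k \in [:: shift j 0; shift j 1; shift j 2]].
have [y [s1 s2]] := H x.
suff K : forall psi, solves (@next n) (@dep1 n) (@G140 n) psi x y -> y (shift j 1) = ~~ psi (shift j 1).
  by apply: negb_inj; rewrite -(K _ s1) -(K _ s2).
move=> psi s.
have y3 : y (shift j 3) = false.
  rewrite s /G140 ffunE !inE; neqs; done.
have y2 : y (shift j 2) = false.
  rewrite s /G140 /dep1 next_shift prev_shiftS y3 !ffunE !inE; neqs; by case: (psi _).
rewrite s /G140 /dep1 next_shift prev_shiftS y2 !ffunE !inE; neqs; by case: (psi _).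
Qed.
End R140b.

Section RL.
Variable n : nat.
Lemma rl_lt (phi : {ffun 'I_n -> bool}) nb :
  (forall k j, exists2 e, e < n & iter e nb k = j) -> phi != all1 n ->
  forall i, (rl phi nb (nb i) < rl phi nb i) = phi i.
Proof.
move=> cov h i; case pi: (phi i).
  by rewrite (rlS cov (neq_all1 h) pi) ltnSn.
by rewrite (@rl0 n phi nb i) ?pi // ltn0.
Qed.
End RL.

Section C140.
Variable n : nat.
Hypothesis n4 : 3 < n.

Lemma card140 : #|all_dynamics 140 n| = (2 ^ n).-1.
Proof.
apply: (@card_all_dyn 140 n (@feat140 n) (@next n) (@dep1 n) (@G140 n)
          (fun phi => rl phi (@next n))).
- exact: sol140.
- by move=> t i; rewrite /dep1 ffunE.
- move=> t; have [i imin] := exists_min t (ltnW (ltnW (ltnW n4))).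
  apply/negP => /eqP /ffunP /(_ i); rewrite !ffunE => h.
  by move: (imin (next i)); rewrite leqNgt h.
- by move=> t t' H; apply/ffunP => i; rewrite !ffunE H.
- move=> phi h; apply/ffunP => i; rewrite ffunE; apply: rl_lt => //; exact: cover_next.
- by move=> phi phi' _ _; apply: inj140.
Qed.
End C140.


Section Rules.
Variable n : nat.
Definition featP (t : 'I_n -> nat) : {ffun 'I_n -> bool} := [ffun i => t (prev i) < t i].
Definition G28 (x : conf n) (phi : {ffun 'I_n -> bool}) (i : 'I_n) (v : bool) :=
  if v then ~~ x i && ~~ x (next i) else x i.
Definition G44 (x : conf n) (phi : {ffun 'I_n -> bool}) (i : 'I_n) (v : bool) :=
  if v then ~~ x i && x (next i) else x i.
Definition feat32 (t : 'I_n -> nat) : {ffun 'I_n -> bool} :=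
  [ffun i => (t (prev i) < t i) || (t (next i) < t i)].
Definition dep0 (phi : {ffun 'I_n -> bool}) (i : 'I_n) := false.
Definition G32 (x : conf n) (phi : {ffun 'I_n -> bool}) (i : 'I_n) (v : bool) :=
  x (prev i) && ~~ x i && x (next i) && ~~ phi i.

Lemma sol28 D x : is_schedule D ->
  solves (@prev n) (@dep1 n) G28 (featP (tD D)) x (sched_update 28 D x).
Proof.
move=> sD i; rewrite (@sched_teq 28 n D x sD i) /G28 /dep1 ffunE rule28E.
case: (if _ then _ else _) => /=; last by rewrite orbF.
case xi: (x i) => //=.
case: ifP => hn //.
rewrite (@sched_teq 28 n D x sD (next i)) prev_next xi.
have -> : (tD D i < tD D (next i)) = false by apply/negbTE; rewrite -leqNgt ltnW.
by rewrite rule28E /= orbF.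
Qed.

Lemma sol44 D x : is_schedule D ->
  solves (@prev n) (@dep1 n) G44 (featP (tD D)) x (sched_update 44 D x).
Proof.
move=> sD i; rewrite (@sched_teq 44 n D x sD i) /G44 /dep1 ffunE rule44E.
case: (if _ then _ else _) => /=; last by rewrite orbF.
case xi: (x i) => //=.
case: ifP => hn //.
rewrite (@sched_teq 44 n D x sD (next i)) prev_next xi.
have -> : (tD D i < tD D (next i)) = false by apply/negbTE; rewrite -leqNgt ltnW.
by rewrite rule44E /= orbF.
Qed.

Lemma sol32 D x : is_schedule D ->
  solves (@next n) dep0 G32 (feat32 (tD D)) x (sched_update 32 D x).
Proof.
move=> sD i; rewrite (@sched_teq 32 n D x sD i) /G32 ffunE rule32E.
case xi: (x i); first by rewrite /= !andbF.
have hp : (if tD D (prev i) < tD D i then sched_update 32 D x (prev i) else x (prev i))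
          = x (prev i) && ~~ (tD D (prev i) < tD D i).
  case: ifP => hp; last by rewrite andbT.
  rewrite (@sched_teq 32 n D x sD (prev i)) next_prev xi.
  have -> : (tD D i < tD D (prev i)) = false by apply/negbTE; rewrite -leqNgt ltnW.
  by rewrite rule32E /= !andbF.
have hn : (if tD D (next i) < tD D i then sched_update 32 D x (next i) else x (next i))
          = x (next i) && ~~ (tD D (next i) < tD D i).
  case: ifP => hn; last by rewrite andbT.
  rewrite (@sched_teq 32 n D x sD (next i)) prev_next xi.
  have -> : (tD D i < tD D (next i)) = false by apply/negbTE; rewrite -leqNgt ltnW.
  by rewrite rule32E /= !andbF.
rewrite hp hn.
by case: (x (prev i)); case: (x (next i)); case: (_ < _); case: (_ < _).
Qed.
End Rules.

Section Inj.
Variable n : nat.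
Hypothesis n4 : 3 < n.

Lemma inj28 (phi phi' : {ffun 'I_n -> bool}) :
  (forall x, exists y, solves (@prev n) (@dep1 n) (@G28 n) phi x y /\
                       solves (@prev n) (@dep1 n) (@G28 n) phi' x y) -> phi = phi'.
Proof.
move=> H; apply/ffunP => i.
have [j <-] := exists_base i 3.
pose x : conf n := [ffun k => k \in [:: shift j 1]].
have [y [s1 s2]] := H x.
suff K : forall psi, solves (@prev n) (@dep1 n) (@G28 n) psi x y -> y (shift j 3) = psi (shift j 3).
  by rewrite -(K _ s1) -(K _ s2).
move=> psi s.
have y0 : y (shift j 0) = false.
  rewrite s /G28 /dep1 next_shift !ffunE !inE; neqs; by rewrite /= if_same.
have y1 : y (shift j 1) = true.
  rewrite s /G28 /dep1 next_shift prev_shiftS y0 !ffunE !inE; neqs; by case: (psi _).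
have y2 : y (shift j 2) = true.
  rewrite s /G28 /dep1 next_shift prev_shiftS y1 !ffunE !inE; neqs; by case: (psi _).
rewrite s /G28 /dep1 next_shift prev_shiftS y2 !ffunE !inE; neqs; by case: (psi _).
Qed.

Lemma inj32 (phi phi' : {ffun 'I_n -> bool}) :
  (forall x, exists y, solves (@next n) (@dep0 n) (@G32 n) phi x y /\
                       solves (@next n) (@dep0 n) (@G32 n) phi' x y) -> phi = phi'.
Proof.
move=> H; apply/ffunP => i.
have [j <-] := exists_base i 1.
pose x : conf n := [ffun k => k \in [:: shift j 0; shift j 2]].
have [y [s1 s2]] := H x.
suff K : forall psi, solves (@next n) (@dep0 n) (@G32 n) psi x y -> y (shift j 1) = ~~ psi (shift j 1).
  by apply: negb_inj; rewrite -(K _ s1) -(K _ s2).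
move=> psi s.
rewrite s /G32 next_shift prev_shiftS !ffunE !inE; neqs; done.
Qed.

Hypothesis n5 : 4 < n.
Lemma inj44 (phi phi' : {ffun 'I_n -> bool}) :
  (forall x, exists y, solves (@prev n) (@dep1 n) (@G44 n) phi x y /\
                       solves (@prev n) (@dep1 n) (@G44 n) phi' x y) -> phi = phi'.
Proof.
move=> H; apply/ffunP => i.
have [j <-] := exists_base i 4.
pose x : conf n := [ffun k => k \in [:: shift j 2; shift j 4]].
have [y [s1 s2]] := H x.
suff K : forall psi, solves (@prev n) (@dep1 n) (@G44 n) psi x y -> y (shift j 4) = ~~ psi (shift j 4).
  by apply: negb_inj; rewrite -(K _ s1) -(K _ s2).
move=> psi s.
have y0 : y (shift j 0) = false.
  rewrite s /G44 /dep1 next_shift !ffunE !inE; neqs; by rewrite /= if_same.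
have y1 : y (shift j 1) = false.
  rewrite s /G44 /dep1 next_shift prev_shiftS y0 !ffunE !inE; neqs; by case: (psi _).
have y2 : y (shift j 2) = true.
  rewrite s /G44 /dep1 next_shift prev_shiftS y1 !ffunE !inE; neqs; by case: (psi _).
have y3 : y (shift j 3) = true.
  rewrite s /G44 /dep1 next_shift prev_shiftS y2 !ffunE !inE; neqs; by case: (psi _).
rewrite s /G44 /dep1 next_shift prev_shiftS y3 !ffunE !inE; neqs; by case: (psi _).
Qed.
End Inj.


Section N4.
Variable n : nat.
Hypothesis n4 : n = 4.

Lemma shift4 (j : 'I_n) : shift j 4 = shift j 0.
Proof. apply: val_inj => /=; rewrite addn0 -{1}n4 modnDr //. Qed.

Lemma notall4 (psi : {ffun 'I_n -> bool}) j : psi != all1 n ->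
  ~~ [&& psi (shift j 0), psi (shift j 1), psi (shift j 2) & psi (shift j 3)].
Proof.
move=> h; apply/negP => /and4P [a0 a1 a2 a3]; move/eqP: h; apply.
apply/ffunP => i; rewrite ffunE.
have [e en <-] := cover_next j i; rewrite iter_next.
have : e < 4 by rewrite -n4.
by case: e {en} => [|[|[|[|e]]]].
Qed.

Lemma key44_4 (psi : {ffun 'I_n -> bool}) (j : 'I_n) (y z : conf n) :
  psi != all1 n ->
  solves (@prev n) (@dep1 n) (@G44 n) psi
     [ffun k => k \in [:: shift j 1; shift j 3]] y ->
  solves (@prev n) (@dep1 n) (@G44 n) psi
     [ffun k => k \in [:: shift j 1; shift j 2; shift j 3]] z ->
  (y (shift j 0) && z (shift j 0)) = ~~ psi (shift j 0).
Proof.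
move=> /(notall4 j) na s t.
have p0 : prev (shift j 0) = shift j 3 by rewrite -shift4 prev_shiftS.
move: (s (shift j 0)) (s (shift j 1)) (s (shift j 2)) (s (shift j 3))
      (t (shift j 0)) (t (shift j 1)) (t (shift j 2)) (t (shift j 3)) na.
rewrite /G44 /dep1 !prev_shiftS p0 !next_shift shift4 !ffunE !inE; neqs.
move: (psi (shift j 0)) (psi (shift j 1)) (psi (shift j 2)) (psi (shift j 3))
      (y (shift j 0)) (y (shift j 1)) (y (shift j 2)) (y (shift j 3))
      (z (shift j 0)) (z (shift j 1)) (z (shift j 2)) (z (shift j 3)).
by do 12! case.
Qed.

Lemma inj44_4 (phi phi' : {ffun 'I_n -> bool}) : phi != all1 n -> phi' != all1 n ->
  (forall x, exists y, solves (@prev n) (@dep1 n) (@G44 n) phi x y /\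
                       solves (@prev n) (@dep1 n) (@G44 n) phi' x y) -> phi = phi'.
Proof.
move=> h1 h2 H; apply/ffunP => i.
have [yA [sA sA']] := H [ffun k => k \in [:: shift i 1; shift i 3]].
have [yB [sB sB']] := H [ffun k => k \in [:: shift i 1; shift i 2; shift i 3]].
rewrite -(shift0 i); apply: negb_inj.
by rewrite -(key44_4 h1 sA sB) -(key44_4 h2 sA' sB').
Qed.
End N4.


Section Cards.
Variable n : nat.
Hypothesis n4 : 3 < n.
Let n0 : 0 < n. Proof. by apply: (leq_trans _ n4). Qed.

Lemma card28 : #|all_dynamics 28 n| = (2 ^ n).-1.
Proof.
apply: (@card_all_dyn 28 n (@featP n) (@prev n) (@dep1 n) (@G28 n)
          (fun phi => rl phi (@prev n))).
- exact: sol28.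
- by move=> t i; rewrite /dep1 ffunE.
- move=> t; have [i imin] := exists_min t n0.
  apply/negP => /eqP /ffunP /(_ i); rewrite !ffunE => h.
  by move: (imin (prev i)); rewrite leqNgt h.
- by move=> t t' H; apply/ffunP => i; rewrite !ffunE H.
- move=> phi h; apply/ffunP => i; rewrite ffunE; apply: rl_lt => //; exact: cover_prev.
- by move=> phi phi' _ _; apply: inj28.
Qed.

Lemma card44 : #|all_dynamics 44 n| = (2 ^ n).-1.
Proof.
apply: (@card_all_dyn 44 n (@featP n) (@prev n) (@dep1 n) (@G44 n)
          (fun phi => rl phi (@prev n))).
- exact: sol44.
- by move=> t i; rewrite /dep1 ffunE.
- move=> t; have [i imin] := exists_min t n0.
  apply/negP => /eqP /ffunP /(_ i); rewrite !ffunE => h.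
  by move: (imin (prev i)); rewrite leqNgt h.
- by move=> t t' H; apply/ffunP => i; rewrite !ffunE H.
- move=> phi h; apply/ffunP => i; rewrite ffunE; apply: rl_lt => //; exact: cover_prev.
- move=> phi phi' h1 h2; case: (ltngtP n 4) => e.
  + by move: n4; rewrite ltnNge -ltnS e.
  + exact: inj44.
  + exact: inj44_4.
Qed.

Lemma card32 : #|all_dynamics 32 n| = (2 ^ n).-1.
Proof.
apply: (@card_all_dyn 32 n (@feat32 n) (@next n) (@dep0 n) (@G32 n)
          (fun phi => rl phi (@next n))).
- exact: sol32.
- by [].
- move=> t; have [i imin] := exists_min t n0.
  apply/negP => /eqP /ffunP /(_ i); rewrite !ffunE.
  by rewrite ltnNge imin ltnNge imin.
- by move=> t t' H; apply/ffunP => i; rewrite !ffunE !H.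
- move=> phi h; apply/ffunP => i; rewrite ffunE.
  case pi: (phi i).
    by rewrite (rl_lt (@cover_next n) h) pi orbT.
  by rewrite (@rl0 n phi (@next n) i) ?pi.
- by move=> phi phi' _ _; apply: inj32.
Qed.
End Cards.

Import GRing.Theory Num.Theory.
Local Open Scope ring_scope.
Theorem mainTheorem5 (n alpha : nat) :
  (3 < n)%N -> alpha \in [:: 28; 32; 44; 140]%N ->
  mu alpha n = (2%:R ^+ n - 1) / (3%:R ^+ n - 2%:R ^+ n.+1 + 2%:R) :> rat.
Proof.
move=> n4 ha.
rewrite /mu.
have -> : #|all_dynamics alpha n| = (2 ^ n).-1.
  move: ha; rewrite !inE => /or4P [] /eqP ->.
  - exact: card28.
  - exact: card32.
  - exact: card44.
  - exact: card140.
by rewrite -subn1 natrB ?expn_gt0 // natrX.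
Qed.
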